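(* For any graph $G$ and any bipartite graph $H$ in which all vertex degrees are odd, $\alpha_{\mathrm{od}}(\mu[G,H])\ge \frac12|H|\cdot\alpha_{\mathrm{od}}(G\,\Box\,K_2)$.
   Context: For graphs $G$ and $H$, $\mu[G,H]$ is the graph obtained by replacing each vertex $w\in V(H)$ with a copy $G_w$ of $G$ and, for every edge $w_1w_2\in E(H)$, adding the perfect matching between $G_{w_1}$ and $G_{w_2}$ joining the two copies of each vertex of $G$. $G\,\Box\,K_2$ is the Cartesian product of $G$ with an edge (two copies of $G$ with a perfect matching between corresponding vertices). An odd independent set in a graph $F=(V,E)$ is an independent set $S$ such that every $v\in V\setminus S$ has either no neighbor or an odd number of neighbors in $S$; $\alpha_{\mathrm{od}}(F)$ is the maximum size of such a set. $|H|$ is the number of vertices. *)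

(* Defs.v *)
From mathcomp Require Import all_boot.
Set Implicit Arguments. Unset Strict Implicit. Unset Printing Implicit Defensive.

Definition simple_graph (T : finType) (e : rel T) : Prop :=
  symmetric e /\ irreflexive e.

Definition nbrs_in (T : finType) (e : rel T) (S : {set T}) (v : T) : {set T} :=
  [set u in S | e v u].

Definition odd_indep (T : finType) (e : rel T) (S : {set T}) : bool :=
  [forall x in S, forall y in S, ~~ e x y] &&
  [forall v in ~: S, (#|nbrs_in e S v| == 0) || odd #|nbrs_in e S v|].

Definition alpha_od (T : finType) (e : rel T) : nat :=
  \max_(S : {set T} | odd_indep e S) #|S|.

(* mu[G,H]: vertex (u,w) is the copy of u in G_w; edges inside each copy,
   and matching edges (u,w1)-(u,w2) for every edge w1w2 of H *)
Definition mu_rel (VG VH : finType) (eG : rel VG) (eH : rel VH) : rel (VG * VH) :=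
  fun p q => ((p.2 == q.2) && eG p.1 q.1) || ((p.1 == q.1) && eH p.2 q.2).

Definition box_rel (VG VF : finType) (eG : rel VG) (eF : rel VF) : rel (VG * VF) :=
  fun p q => ((p.2 == q.2) && eG p.1 q.1) || ((p.1 == q.1) && eF p.2 q.2).

Definition K2_rel : rel bool := fun a b => a != b.

Definition bipartite (T : finType) (e : rel T) : Prop :=
  exists c : T -> bool, forall x y, e x y -> c x != c y.

Definition deg (T : finType) (e : rel T) (v : T) : nat := #|[set u | e v u]|.

(* Main.v *)
Require Import Defs.
From mathcomp Require Import all_boot.

Lemma card_sumb (X : finType) (A : {set X}) : #|A| = \sum_(x : X) (x \in A).
Proof. by rewrite -sum1_card big_mkcond /=; apply: eq_bigr => x _; case: (x \in A). Qed.

Lemma sum_pair (I J : finType) (F : I * J -> nat) :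
  \sum_(x : I * J) F x = \sum_(i : I) \sum_(j : J) F (i, j).
Proof. rewrite pair_big /=; apply: eq_bigr => -[i j] _ //. Qed.

Section Main.
Variables (VG VH : finType) (eG : rel VG) (eH : rel VH).
Variable S : {set VG * bool}.

Definition Tc (c : VH -> bool) : {set VG * VH} := [set p | (p.1, c p.2) \in S].

Lemma card_T (c : VH -> bool) : #|Tc c| + #|Tc (negb \o c)| = #|VH| * #|S|.
Proof.
rewrite !card_sumb -big_split /= !sum_pair big_distrr /=.
apply: eq_bigr => u _.
rewrite big_bool /=.
have -> : \sum_(w : VH) (((u, w) \in Tc c) + ((u, w) \in Tc (negb \o c)))
   = \sum_(w : VH) (((u, true) \in S) + ((u, false) \in S)).
  apply: eq_bigr => w _; rewrite !inE /=; case: (c w) => //=; exact: addnC.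
by rewrite sum_nat_const cardT.
Qed.

Lemma T_ok (c : VH -> bool) :
  simple_graph eG -> simple_graph eH -> (forall w : VH, odd (deg eH w)) ->
  (forall x y, eH x y -> c x != c y) ->
  odd_indep (box_rel eG K2_rel) S -> odd_indep (mu_rel eG eH) (Tc c).
Proof.
move=> [_ irrG] [_ irrH] hdeg hc /andP[/forallP hi /forallP ho].
have HSi : forall x y, x \in S -> y \in S -> ~~ box_rel eG K2_rel x y.
  by move=> x y xS yS; move/implyP: (hi x) => /(_ xS) /forallP /(_ y) /implyP; apply.
apply/andP; split.
  apply/forallP => -[u w]; apply/implyP; rewrite inE /= => xS.
  apply/forallP => -[u' w']; apply/implyP; rewrite inE /= => yS.
  rewrite /mu_rel /=; apply/negP => /orP[/andP[/eqP ew eu]|/andP[/eqP eu ew]].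
    subst w'; move: (HSi _ _ xS yS); rewrite /box_rel /= eqxx eu //.
  subst u'; move: (HSi _ _ xS yS); rewrite /box_rel /= eqxx /K2_rel (hc _ _ ew) orbT //.
apply/forallP => -[u w]; apply/implyP; rewrite !inE /= => nS.
have := ho (u, c w); rewrite inE nS /= => hod.
set A0 := [set u' | eG u u' && ((u', c w) \in S)].
set k : bool := (u, ~~ c w) \in S.
have E1 : nbrs_in (mu_rel eG eH) (Tc c) (u, w) =
   setX A0 [set w] :|: setX [set u] [set w' | eH w w' && k].
  apply/setP => -[u' w']; rewrite !inE /mu_rel /=.
  case: (eqVneq w w') => [<-|nw]; case: (eqVneq u u') => [<-|nu];
    rewrite ?irrG ?irrH ?eqxx /= ?andbF ?andbT ?orbF //=.
  - exact: andbC.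
  - case ew: (eH w w'); rewrite ?andbF ?andbT // /k.
    by move/hc: ew; case: (c w); case: (c w').
have E2 : nbrs_in (box_rel eG K2_rel) S (u, c w) =
   setX A0 [set c w] :|: setX [set u] [set b | (b == ~~ c w) && k].
  apply/setP => -[u' b]; rewrite !inE /box_rel /K2_rel /=.
  case: (eqVneq (c w) b) => [<-|nb]; case: (eqVneq u u') => [<-|nu];
    rewrite ?irrG ?eqxx /= ?andbF ?andbT ?orbF //=.
  - by case: (c w).
  - exact: andbC.
  - by rewrite /k; move: nb; case: (c w); case: b.
have D1 : forall (X : finType) (Y : finType) (a : {set X}) (y : Y) (x : X) (B : {set Y}),
    x \notin a -> #|setX a [set y] :|: setX [set x] B| = #|a| + #|B|.
  move=> X Y a y x B xa.
  rewrite cardsU !cardsX !cards1 muln1 mul1n.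
  suff -> : setX a [set y] :&: setX [set x] B = set0 by rewrite cards0 subn0.
  apply/setP => -[x' y']; rewrite !inE; apply/negP => /andP[/andP[h1 _] /andP[/eqP h2 _]].
  by move: h1; rewrite h2 (negbTE xa).
have uA : u \notin A0 by rewrite inE irrG.
rewrite E1 D1 //; rewrite E2 D1 // in hod. clear E1 E2. clearbody k.
have C1 : #|[set w' | eH w w' && k]| = k * deg eH w.
  rewrite /deg; move: hod; case: k => hod /=; rewrite ?mul1n ?mul0n.
    by apply: eq_card => x; rewrite !inE andbT.
  by apply: eq_card0 => x; rewrite !inE andbF.
have C2 : #|[set b | (b == ~~ c w) && k]| = k.
  clear C1; move: hod; case: k => hod /=.
    by rewrite (eq_card (B := pred1 (~~ c w))) ?card1 // => x; rewrite !inE andbT.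
  by apply: eq_card0 => x; rewrite !inE andbF.
rewrite C1; rewrite C2 in hod; clear C1 C2.
move: hod (hdeg w); case: k => /=; rewrite ?mul1n ?mul0n ?addn0 //.
rewrite addn1 /= => ho1 od; rewrite oddD od /=.
by rewrite (negbTE ho1) orbT.
Qed.
End Main.

Lemma odd_indep0 (T : finType) (e : rel T) : odd_indep e set0.
Proof.
apply/andP; split; apply/forallP => x; apply/implyP; rewrite ?inE //= => _.
suff -> : nbrs_in e set0 x = set0 by rewrite cards0.
by apply/setP => y; rewrite !inE.
Qed.

Theorem theorem4 (VG VH : finType) (eG : rel VG) (eH : rel VH) :
  simple_graph eG -> simple_graph eH ->
  bipartite eH -> (forall w : VH, odd (deg eH w)) ->
  #|VH| * alpha_od (box_rel eG K2_rel) <= 2 * alpha_od (mu_rel eG eH).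
Proof.
move=> sG sH [c hc] hdeg.
have [S SA ->] : {S | S \in odd_indep (box_rel eG K2_rel) & alpha_od (box_rel eG K2_rel) = #|S|}.
  apply: eq_bigmax_cond; apply/card_gt0P; exists set0; exact: odd_indep0.
have hc' : forall x y, eH x y -> (negb \o c) x != (negb \o c) y.
  by move=> x y /hc /=; case: (c x); case: (c y).
rewrite -(@card_T _ _ S c) mul2n -addnn leq_add //; apply: leq_bigmax_cond; exact: T_ok.
Qed.
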